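(* Let $a,b\in\mathbb{R}^+\cup\{\infty\}$, $n\ge1$, $g\in C^1(\mathbb{R}^n,\mathbb{R}^n)$, and define $F:(-a,b)\times\mathbb{R}^n\to(-a,b)\times\mathbb{R}^n$ by $F(U,X)=(U,\,X+g(X)\,U_+)$, where $U_+=\max(U,0)$. Then there exists an open set $W$ containing $(-a,0]\times\mathbb{R}^n$ such that $F|_W$ is injective. *)

(* Defs.v *)
From Stdlib Require Import Reals.
From Stdlib Require Fin.
Open Scope R_scope.

Definition vec (n : nat) := Fin.t n -> R.

Definition basis {n : nat} (j : Fin.t n) : vec n :=
  fun i => if Fin.eqb i j then 1 else 0.

Definition vshift {n : nat} (x : vec n) (t : R) (v : vec n) : vec n :=
  fun i => x i + t * v i.

(* continuity of a real-valued function on R^n (Euclidean topology, via the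
   equivalent sup-distance balls) *)
Definition cont_vec {n : nat} (h : vec n -> R) : Prop :=
  forall x eps, 0 < eps -> exists delta, 0 < delta /\
    forall y, (forall i, Rabs (y i - x i) < delta) -> Rabs (h y - h x) < eps.

Definition C1_vec {n : nat} (g : vec n -> vec n) : Prop :=
  exists dg : Fin.t n -> Fin.t n -> vec n -> R,
    (forall i j x, derivable_pt_lim (fun t => g (vshift x t (basis j)) i) 0 (dg i j x))
    /\ (forall i j, cont_vec (dg i j)).

(* extended positive reals R^+ ∪ {∞}: None = ∞, Some a with 0 < a *)
Definition ext_pos (a : option R) : Prop :=
  match a with Some r => 0 < r | None => True end.

Definition in_interval (a b : option R) (u : R) : Prop :=
  (match a with Some r => - r < u | None => True end) /\
  (match b with Some r => u < r | None => True end).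

Definition open_RxRn {n : nat} (W : (R * vec n)%type -> Prop) : Prop :=
  forall p, W p -> exists eps, 0 < eps /\
    forall q : (R * vec n)%type, Rabs (fst q - fst p) < eps ->
      (forall i, Rabs (snd q i - snd p i) < eps) -> W q.

Definition Fmap {n : nat} (g : vec n -> vec n) (p : (R * vec n)%type) : (R * vec n)%type :=
  (fst p, fun i => snd p i + g (snd p) i * Rmax (fst p) 0).

(* Main.v *)
Require Import Defs.
From Stdlib Require Import Reals Lra Lia.
From Stdlib Require Fin.
From Stdlib Require Import FunctionalExtensionality.
Open Scope R_scope.

Lemma fin_min (n : nat) (P : Fin.t n -> R -> Prop) :
  (forall i d d', P i d -> 0 < d' -> d' <= d -> P i d') ->
  (forall i, exists d, 0 < d /\ P i d) -> exists d, 0 < d /\ forall i, P i d.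
Proof.
  induction n as [|n IH]; intros Hm Hex.
  - exists 1; split; [lra|]. intro i; apply (Fin.case0 (fun i => P i 1) i).
  - destruct (IH (fun i d => P (Fin.FS i) d)) as [d1 [Hd1 H1]].
    + intros; eapply Hm; eauto.
    + intros; apply Hex.
    + destruct (Hex Fin.F1) as [d0 [Hd0 H0]].
      exists (Rmin d0 d1); split; [apply Rmin_pos; auto|].
      intro i. apply (Fin.caseS' i (fun i => P i (Rmin d0 d1))).
      * eapply Hm; eauto; [apply Rmin_pos; auto| apply Rmin_l].
      * intro p; eapply Hm; eauto; [apply Rmin_pos; auto| apply Rmin_r].
Qed.

Lemma fin_up (n : nat) (P : Fin.t n -> R -> Prop) :
  (forall i d d', P i d -> d <= d' -> P i d') ->
  (forall i, exists d, P i d) -> exists d, 0 <= d /\ forall i, P i d.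
Proof.
  induction n as [|n IH]; intros Hm Hex.
  - exists 0; split; [lra|]. intro i; apply (Fin.case0 (fun i => P i 0) i).
  - destruct (IH (fun i d => P (Fin.FS i) d)) as [d1 [Hd1 H1]].
    + intros; eapply Hm; eauto.
    + intros; apply Hex.
    + destruct (Hex Fin.F1) as [d0 H0].
      exists (Rmax d0 d1); split; [eapply Rle_trans; [exact Hd1| apply Rmax_r]|].
      intro i. apply (Fin.caseS' i (fun i => P i (Rmax d0 d1))).
      * eapply Hm; eauto; apply Rmax_l.
      * intro p; eapply Hm; eauto; apply Rmax_r.
Qed.

Lemma open_lt (u c m : R) : u * c < m -> 0 <= c ->
  exists e, 0 < e /\ forall u', Rabs (u' - u) < e -> u' * c < m.
Proof.
  intros H Hc. exists ((m - u*c)/(c+1)). split.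
  - apply Rdiv_lt_0_compat; lra.
  - intros u' Hu'.
    assert (Hk: (u'-u)*c <= Rabs (u'-u) * c) by (apply Rmult_le_compat_r; [lra| apply Rle_abs]).
    assert (Hk2: Rabs (u'-u) * (c+1) < m - u*c).
    { apply (Rmult_lt_compat_r (c+1)) in Hu'; [|lra].
      unfold Rdiv in Hu'. rewrite Rmult_assoc, Rinv_l in Hu' by lra. lra. }
    pose proof (Rabs_pos (u'-u)). nra.
Qed.

Lemma open_interval a b u : in_interval a b u ->
  exists e, 0 < e /\ forall u', Rabs (u' - u) < e -> in_interval a b u'.
Proof.
  intros [Ha Hb].
  destruct a as [ra|]; destruct b as [rb|].
  - exists (Rmin (u + ra) (rb - u)). split; [apply Rmin_pos; lra|].
    intros u' H. pose proof (Rmin_l (u+ra) (rb-u)); pose proof (Rmin_r (u+ra) (rb-u)).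
    apply Rabs_def2 in H. split; simpl; lra.
  - exists (u + ra). split; [lra|]. intros u' H. apply Rabs_def2 in H. split; simpl; lra.
  - exists (rb - u). split; [lra|]. intros u' H. apply Rabs_def2 in H. split; simpl; lra.
  - exists 1. split; [lra|]. intros; split; simpl; auto.
Qed.

Lemma vshift_vshift {n} (w : vec n) t s e : vshift (vshift w t e) s e = vshift w (t + s) e.
Proof. apply functional_extensionality; intro i; unfold vshift; ring. Qed.

Lemma vshift_0 {n} (w : vec n) e : vshift w 0 e = w.
Proof. apply functional_extensionality; intro i; unfold vshift; ring. Qed.

Lemma shift_deriv {n} (g : vec n -> vec n) (dg : Fin.t n -> Fin.t n -> vec n -> R) :
  (forall i j x, derivable_pt_lim (fun t => g (vshift x t (basis j)) i) 0 (dg i j x)) ->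
  forall i j w t, derivable_pt_lim (fun s => g (vshift w s (basis j)) i) t
                                   (dg i j (vshift w t (basis j))).
Proof.
  intros Hd i j w t eps Heps.
  destruct (Hd i j (vshift w t (basis j)) eps Heps) as [delta Hdel].
  exists delta. intros h Hh Hhd. specialize (Hdel h Hh Hhd).
  rewrite !vshift_vshift, Rplus_0_l, Rplus_0_r in Hdel. exact Hdel.
Qed.

Lemma coord_step {n} (g : vec n -> vec n) (dg : Fin.t n -> Fin.t n -> vec n -> R) :
  (forall i j x, derivable_pt_lim (fun t => g (vshift x t (basis j)) i) 0 (dg i j x)) ->
  forall i j w h M,
  (forall t, (0 <= t <= h \/ h <= t <= 0) -> Rabs (dg i j (vshift w t (basis j))) <= M) ->
  Rabs (g (vshift w h (basis j)) i - g w i) <= M * Rabs h.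
Proof.
  intros Hd i j w h M HM.
  pose proof (shift_deriv g dg Hd i j w) as HD.
  destruct (total_order_T 0 h) as [[Hlt|Heq]|Hgt].
  - destruct (MVT_cor2 (fun s => g (vshift w s (basis j)) i)
                       (fun s => dg i j (vshift w s (basis j))) 0 h Hlt) as [c [Hc Hcb]].
    { intros c _; apply HD. }
    simpl in Hc. rewrite vshift_0 in Hc. rewrite Hc, Rabs_mult.
    rewrite Rminus_0_r. apply Rmult_le_compat_r; [apply Rabs_pos|]. apply HM; lra.
  - subst h. rewrite vshift_0; unfold Rminus; rewrite Rplus_opp_r, Rabs_R0. lra.
  - destruct (MVT_cor2 (fun s => g (vshift w s (basis j)) i)
                       (fun s => dg i j (vshift w s (basis j))) h 0 Hgt) as [c [Hc Hcb]].
    { intros c _; apply HD. }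
    simpl in Hc. rewrite vshift_0 in Hc.
    replace (g (vshift w h (basis j)) i - g w i) with (- (g w i - g (vshift w h (basis j)) i)) by ring.
    rewrite Rabs_Ropp, Hc, Rabs_mult.
    apply Rmult_le_compat; try apply Rabs_pos.
    + apply HM; lra.
    + replace (0 - h) with (- h) by ring; rewrite Rabs_Ropp; lra.
Qed.

Lemma abs_le_iff a b : Rabs a <= b <-> - b <= a <= b.
Proof. unfold Rabs; destruct (Rcase_abs a); split; intros; lra. Qed.

Definition hyb {n} (y z : vec n) (k : nat) : vec n :=
  fun i => if Nat.ltb (proj1_sig (Fin.to_nat i)) k then y i else z i.

Lemma box_lip {n} (g : vec n -> vec n) (dg : Fin.t n -> Fin.t n -> vec n -> R) :
  (forall i j x, derivable_pt_lim (fun t => g (vshift x t (basis j)) i) 0 (dg i j x)) ->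
  forall x delta M, 0 <= M ->
  (forall i j w, (forall k, Rabs (w k - x k) <= delta) -> Rabs (dg i j w) <= M) ->
  forall y z, (forall k, Rabs (y k - x k) <= delta) -> (forall k, Rabs (z k - x k) <= delta) ->
  forall D, (forall k, Rabs (y k - z k) <= D) ->
  forall i, Rabs (g y i - g z i) <= INR n * M * D.
Proof.
  intros Hd x delta M HM0 HM y z Hy Hz D HD.
  assert (Hcl: forall k, (k <= n)%nat -> forall i, Rabs (g (hyb y z k) i - g z i) <= INR k * M * D).
  { induction k as [|k IH]; intros Hk i.
    - replace (hyb y z 0) with z.
      + unfold Rminus; rewrite Rplus_opp_r, Rabs_R0; simpl; lra.
      + apply functional_extensionality; intro l; unfold hyb; simpl. reflexivity.
    - assert (Hkn : (k < n)%nat) by lia.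
      set (j := Fin.of_nat_lt Hkn).
      assert (Hj : proj1_sig (Fin.to_nat j) = k) by (unfold j; rewrite Fin.to_nat_of_nat; reflexivity).
      assert (Hhk : forall l, hyb y z k l = y l \/ hyb y z k l = z l).
      { intro l; unfold hyb; destruct (Nat.ltb _ _); auto. }
      assert (Hhkj : hyb y z k j = z j).
      { unfold hyb; rewrite Hj, Nat.ltb_irrefl; reflexivity. }
      assert (Heq : hyb y z (S k) = vshift (hyb y z k) (y j - z j) (basis j)).
      { apply functional_extensionality; intro l. unfold vshift, basis.
        destruct (Fin.eqb l j) eqn:E.
        - apply Fin.eqb_eq in E; subst l. rewrite Hhkj. unfold hyb. rewrite Hj.
          replace (Nat.ltb k (S k)) with true by (symmetry; apply Nat.ltb_lt; lia). ring.
        - assert (Hne : proj1_sig (Fin.to_nat l) <> k).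
          { intro Hc. rewrite <- Hj in Hc. apply Fin.to_nat_inj in Hc. subst l.
            assert (Fin.eqb j j = true) by (apply Fin.eqb_eq; reflexivity). congruence. }
          unfold hyb. destruct (Nat.ltb_spec (proj1_sig (Fin.to_nat l)) (S k));
          destruct (Nat.ltb_spec (proj1_sig (Fin.to_nat l)) k); try lia; ring. }
      assert (Hstep : Rabs (g (vshift (hyb y z k) (y j - z j) (basis j)) i - g (hyb y z k) i)
                      <= M * Rabs (y j - z j)).
      { apply (coord_step g dg Hd). intros t Ht. apply HM. intro l. unfold vshift, basis.
        destruct (Fin.eqb l j) eqn:E.
        - apply Fin.eqb_eq in E; subst l. rewrite Hhkj.
          pose proof (proj1 (abs_le_iff _ _) (Hy j)). pose proof (proj1 (abs_le_iff _ _) (Hz j)).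
          apply abs_le_iff. lra.
        - rewrite Rmult_0_r, Rplus_0_r. destruct (Hhk l) as [-> | ->]; auto. }
      rewrite Heq. specialize (IH ltac:(lia) i).
      replace (g (vshift (hyb y z k) (y j - z j) (basis j)) i - g z i) with
        ((g (vshift (hyb y z k) (y j - z j) (basis j)) i - g (hyb y z k) i) + (g (hyb y z k) i - g z i)) by ring.
      eapply Rle_trans; [apply Rabs_triang|]. rewrite S_INR.
      assert (M * Rabs (y j - z j) <= M * D) by (apply Rmult_le_compat_l; auto).
      lra. }
  replace y with (hyb y z n).
  - apply Hcl; lia.
  - apply functional_extensionality; intro l; unfold hyb.
    destruct (Fin.to_nat l) as [m Hm]; simpl.
    replace (Nat.ltb m n) with true by (symmetry; apply Nat.ltb_lt; lia). reflexivity.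
Qed.

Definition Lip {n} (g : vec n -> vec n) (x : vec n) (Rr L : R) : Prop :=
  forall y z, (forall k, Rabs (y k - x k) <= Rr) -> (forall k, Rabs (z k - x k) <= Rr) ->
  forall D, (forall k, Rabs (y k - z k) <= D) -> forall i, Rabs (g y i - g z i) <= L * D.

Lemma local_lip {n} (g : vec n -> vec n) : C1_vec g ->
  forall x, exists delta, 0 < delta /\ exists L, 0 <= L /\ Lip g x delta L.
Proof.
  intros [dg [Hd Hc]] x.
  destruct (fin_min n (fun i d => forall j w, (forall k, Rabs (w k - x k) < d) ->
                          Rabs (dg i j w - dg i j x) < 1)) as [d0 [Hd0 H0]].
  { intros i d d' H Hd' Hle j w Hw. apply H. intro k; specialize (Hw k); lra. }
  { intro i. destruct (fin_min n (fun j d => forall w, (forall k, Rabs (w k - x k) < d) ->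
                          Rabs (dg i j w - dg i j x) < 1)) as [d1 [Hd1 H1]].
    - intros j d d' H Hd' Hle w Hw. apply H. intro k; specialize (Hw k); lra.
    - intro j. destruct (Hc i j x 1 ltac:(lra)) as [d [Hdp Hdd]]. exists d; split; auto.
    - exists d1; split; auto. }
  destruct (fin_up n (fun i B => forall j, Rabs (dg i j x) <= B)) as [B [HB0 HB]].
  { intros i d d' H Hle j. specialize (H j); lra. }
  { intro i. destruct (fin_up n (fun j B => Rabs (dg i j x) <= B)) as [B [_ HB]].
    - intros; lra.
    - intro j; exists (Rabs (dg i j x)); lra.
    - exists B; auto. }
  exists (d0/2). split; [lra|]. exists (INR n * (B+1)). split.
  { apply Rmult_le_pos; [apply pos_INR| lra]. }
  intros y z Hy Hz D HD i.
  apply (box_lip g dg Hd x (d0/2) (B+1)); auto; try lra.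
  intros i' j w Hw.
  assert (Hlt : forall k, Rabs (w k - x k) < d0) by (intro k; specialize (Hw k); lra).
  specialize (H0 i' j w Hlt). specialize (HB i' j).
  replace (dg i' j w) with ((dg i' j w - dg i' j x) + dg i' j x) by ring.
  eapply Rle_trans; [apply Rabs_triang|]. lra.
Qed.

Definition Wit {n} (g : vec n -> vec n) (u : R) (x : vec n) : Prop :=
  exists x0 r rho L G, 0 <= r /\ r < rho /\ 0 <= L /\ 0 <= G /\
    (forall i, Rabs (x i - x0 i) <= r) /\ Lip g x0 (2*rho) L /\
    (forall z, (forall i, Rabs (z i - x0 i) <= 2*rho) -> forall i, Rabs (g z i) <= G) /\
    u * L < 1 /\ u * (4 * G) < rho.

Lemma inj_core {n} (g : vec n -> vec n) u x y x0 r rho L G y0 r' rho' L' G' :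
  0 < u ->
  (0 <= r /\ r < rho /\ 0 <= L /\ 0 <= G /\
    (forall i, Rabs (x i - x0 i) <= r) /\ Lip g x0 (2*rho) L /\
    (forall z, (forall i, Rabs (z i - x0 i) <= 2*rho) -> forall i, Rabs (g z i) <= G) /\
    u * L < 1 /\ u * (4 * G) < rho) ->
  (0 <= r' /\ r' < rho' /\ 0 <= L' /\ 0 <= G' /\
    (forall i, Rabs (y i - y0 i) <= r') /\ Lip g y0 (2*rho') L' /\
    (forall z, (forall i, Rabs (z i - y0 i) <= 2*rho') -> forall i, Rabs (g z i) <= G') /\
    u * L' < 1 /\ u * (4 * G') < rho') ->
  rho' <= rho ->
  (forall i, x i + g x i * u = y i + g y i * u) ->
  forall i, x i = y i.
Proof.
  intros Hu [Hr [Hrr [HL [HG [Hx [Hlip [Hb [HuL HuG]]]]]]]]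
            [Hr' [Hrr' [HL' [HG' [Hy [Hlip' [Hb' [HuL' HuG']]]]]]]] Hrho Heq.
  assert (Hgx : forall i, Rabs (g x i) <= G).
  { apply Hb. intro i; specialize (Hx i); lra. }
  assert (Hgy : forall i, Rabs (g y i) <= G').
  { apply Hb'. intro i; specialize (Hy i); lra. }
  assert (Hd : forall i, x i - y i = u * (g y i - g x i)).
  { intro i; specialize (Heq i); lra. }
  assert (Habs : forall i, Rabs (x i - y i) = u * Rabs (g x i - g y i)).
  { intro i. rewrite Hd, Rabs_mult, (Rabs_pos_eq u) by lra.
    rewrite <- Rabs_Ropp. f_equal. f_equal. ring. }
  assert (Hxy : forall i, Rabs (x i - y i) <= rho / 2).
  { intro i. rewrite Habs.
    assert (Rabs (g x i - g y i) <= G + G').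
    { unfold Rminus; eapply Rle_trans; [apply Rabs_triang|]. rewrite Rabs_Ropp.
      specialize (Hgx i); specialize (Hgy i); lra. }
    assert (u * Rabs (g x i - g y i) <= u * (G + G')) by (apply Rmult_le_compat_l; lra).
    lra. }
  assert (Hyc : forall i, Rabs (y i - x0 i) <= 2 * rho).
  { intro i. replace (y i - x0 i) with (- (x i - y i) + (x i - x0 i)) by ring.
    eapply Rle_trans; [apply Rabs_triang|]. rewrite Rabs_Ropp.
    specialize (Hxy i); specialize (Hx i); lra. }
  assert (Hxc : forall i, Rabs (x i - x0 i) <= 2 * rho).
  { intro i; specialize (Hx i); lra. }
  assert (Hk : forall k, forall i, Rabs (x i - y i) <= (u * L) ^ k * (rho / 2)).
  { induction k as [|k IH]; intro i.
    - simpl. rewrite Rmult_1_l. apply Hxy.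
    - rewrite Habs. simpl.
      pose proof (Hlip x y Hxc Hyc _ IH i).
      replace (u * L * (u * L) ^ k * (rho / 2)) with (u * (L * ((u * L) ^ k * (rho / 2)))) by ring.
      apply Rmult_le_compat_l; lra. }
  intro i. apply Rminus_diag_uniq.
  destruct (Req_dec (x i - y i) 0) as [E|E]; auto. exfalso.
  pose proof (Rabs_pos_lt _ E) as Hpos.
  assert (HuL0 : 0 <= u * L) by (apply Rmult_le_pos; lra).
  destruct (pow_lt_1_zero (u * L) ltac:(rewrite Rabs_pos_eq; lra)
              (Rabs (x i - y i) / (rho / 2)) ltac:(apply Rdiv_lt_0_compat; lra)) as [N HN].
  specialize (HN N (le_n N)). specialize (Hk N i).
  rewrite Rabs_pos_eq in HN by (apply pow_le; lra).
  apply (Rmult_lt_compat_r (rho/2)) in HN; [|lra].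
  replace (Rabs (x i - y i) / (rho / 2) * (rho / 2)) with (Rabs (x i - y i)) in HN by (field; lra). lra.
Qed.

Theorem lemma6p1 (a b : option R) (n : nat) (g : vec n -> vec n) :
  ext_pos a -> ext_pos b -> (1 <= n)%nat -> C1_vec g ->
  exists W : (R * vec n)%type -> Prop,
    open_RxRn W /\
    (forall p, W p -> in_interval a b (fst p)) /\
    (forall (u : R) (x : vec n), in_interval a b u -> u <= 0 -> W (u, x)) /\
    (forall p q, W p -> W q -> Fmap g p = Fmap g q -> p = q).
Proof.
  intros Ha Hb Hn HC.
  exists (fun p => in_interval a b (fst p) /\ Wit g (fst p) (snd p)).
  split; [|split; [|split]].
  - intros [u x] [Hint [x0 [r [rho [L [G [Hr [Hrr [HL [HG [Hx [Hlip [Hbd [HuL HuG]]]]]]]]]]]]]].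
    simpl in *.
    destruct (open_interval a b u Hint) as [e1 [He1 H1]].
    destruct (open_lt u L 1 HuL HL) as [e2 [He2 H2]].
    destruct (open_lt u (4*G) rho HuG ltac:(lra)) as [e3 [He3 H3]].
    set (e5 := (rho - r)/2).
    exists (Rmin e1 (Rmin e2 (Rmin e3 e5))).
    pose proof (Rmin_l e1 (Rmin e2 (Rmin e3 e5))).
    pose proof (Rmin_r e1 (Rmin e2 (Rmin e3 e5))).
    pose proof (Rmin_l e2 (Rmin e3 e5)). pose proof (Rmin_r e2 (Rmin e3 e5)).
    pose proof (Rmin_l e3 e5). pose proof (Rmin_r e3 e5).
    split.
    { repeat apply Rmin_pos; unfold e5; lra. }
    intros [u' x'] Hu' Hx'. simpl in *.
    split; [apply H1; lra|].
    exists x0, ((r + rho)/2), rho, L, G.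
    repeat split; auto; try lra.
    + intro i. replace (x' i - x0 i) with ((x' i - x i) + (x i - x0 i)) by ring.
      eapply Rle_trans; [apply Rabs_triang|]. specialize (Hx' i); specialize (Hx i).
      unfold e5 in *; lra.
    + apply H2; lra.
    + apply H3; lra.
  - intros p [H _]; exact H.
  - intros u x Hint Hu. split; [exact Hint|]. simpl.
    destruct (local_lip g HC x) as [delta [Hdel [L [HL Hlip]]]].
    destruct (fin_up n (fun i B => Rabs (g x i) <= B)) as [B [HB0 HB]].
    { intros; lra. }
    { intro i; exists (Rabs (g x i)); lra. }
    exists x, 0, (delta/2), L, (B + L * delta).
    assert (HLd : 0 <= L * delta) by (apply Rmult_le_pos; lra).
    repeat split; try lra.
    + intro i. unfold Rminus; rewrite Rplus_opp_r, Rabs_R0; lra.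
    + replace (2 * (delta/2)) with delta by field. exact Hlip.
    + intros z Hz i. replace (2 * (delta/2)) with delta in Hz by field.
      assert (Hx0 : forall k, Rabs (x k - x k) <= delta).
      { intro k. unfold Rminus; rewrite Rplus_opp_r, Rabs_R0; lra. }
      pose proof (Hlip z x Hz Hx0 delta Hz i).
      replace (g z i) with ((g z i - g x i) + g x i) by ring.
      eapply Rle_trans; [apply Rabs_triang|]. specialize (HB i). lra.
    + nra.
    + nra.
  - intros [u x] [u' y] [_ Wx] [_ Wy] HF.
    pose proof (f_equal fst HF) as E1. pose proof (f_equal snd HF) as E2.
    simpl in E1, E2, Wx, Wy. subst u'.
    assert (Ei : forall i, x i + g x i * Rmax u 0 = y i + g y i * Rmax u 0).
    { intro i. exact (f_equal (fun f => f i) E2). }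
    f_equal. apply functional_extensionality. intro i.
    destruct (Rle_dec u 0) as [Hu|Hu].
    + specialize (Ei i). rewrite Rmax_right in Ei by lra. lra.
    + rewrite Rmax_left in Ei by lra.
      destruct Wx as [x0 [r [rho [L [G Hw1]]]]].
      destruct Wy as [y0 [r' [rho' [L' [G' Hw2]]]]].
      destruct (Rle_dec rho' rho).
      * apply (inj_core g u x y x0 r rho L G y0 r' rho' L' G'); auto; lra.
      * symmetry. apply (inj_core g u y x y0 r' rho' L' G' x0 r rho L G); auto; try lra.

Qed.
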